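(* Let $\mathcal V$ be a descent category and $f:X\to Y$, $g:Y\to Z$ morphisms of simplicial spaces. If $f$ and $g\circ f$ are hypercovers, then $g$ is a hypercover.
   Context: A descent category is a small category $\mathcal V$ with a subcategory of morphisms called covers such that: $\mathcal V$ has finite limits; pullbacks of covers are covers; if $f$ and $g\circ f$ are covers then $g$ is a cover. A simplicial space is a simplicial object in $\mathcal V$; $\mathrm{Map}(T,X)$ is the finite limit representing simplicial maps $T\to X$ for a finite simplicial set $T$; $\mathrm{Map}(S\hookrightarrow T,f)=\mathrm{Map}(S,X)\times_{\mathrm{Map}(S,Y)}\mathrm{Map}(T,Y)$. A morphism $f:X\to Y$ is a hypercover if $X_n\to\mathrm{Map}(\partial\Delta^n\hookrightarrow\Delta^n,f)$ is a cover for all $n\ge0$. *)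

(* Defs.v *)
From mathcomp Require Import all_boot.
Set Implicit Arguments. Unset Strict Implicit. Unset Printing Implicit Defensive.

(* [n] = {0,...,n} is 'I_n.+1; morphisms [m] -> [n] are monotone maps. *)
Definition monob m n (f : {ffun 'I_m.+1 -> 'I_n.+1}) : bool :=
  [forall i : 'I_m.+1, forall j : 'I_m.+1, (i <= j) ==> (f i <= f j)].

Definition dmor m n := {f : {ffun 'I_m.+1 -> 'I_n.+1} | monob f}.

Lemma monob_id n : monob [ffun i : 'I_n.+1 => i].
Proof. by apply/forallP => i; apply/forallP => j; apply/implyP; rewrite !ffunE. Qed.

Lemma monob_comp k m n (g : {ffun 'I_m.+1 -> 'I_n.+1}) (f : {ffun 'I_k.+1 -> 'I_m.+1}) :
  monob g -> monob f -> monob [ffun i => g (f i)].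
Proof.
move=> Hg Hf; apply/forallP => i; apply/forallP => j; apply/implyP => hij.
rewrite !ffunE.
have h1 := implyP (forallP (forallP Hf i) j) hij.
exact: (implyP (forallP (forallP Hg (f i)) (f j)) h1).
Qed.

Definition did n : dmor n n := exist (fun f => monob f) _ (monob_id n).
Definition dcomp k m n (b : dmor m n) (a : dmor k m) : dmor k n :=
  exist (fun f => monob f) _ (monob_comp (svalP b) (svalP a)).

(* surjective maps; the non-surjective maps [m] -> [n] are the m-simplices
   of the boundary \partial\Delta^n *)
Definition surjb m n (b : dmor m n) : bool := [forall j : 'I_n.+1, exists i : 'I_m.+1, sval b i == j].

Record category := Category {
  obj :> Type;
  hom : obj -> obj -> Type;
  idm : forall a, hom a a;
  cmp : forall a b c, hom b c -> hom a b -> hom a c;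
  cmp1m : forall a b (f : hom a b), cmp (idm b) f = f;
  cmpm1 : forall a b (f : hom a b), cmp f (idm a) = f;
  cmpA : forall a b c d (h : hom c d) (g : hom b c) (f : hom a b),
      cmp h (cmp g f) = cmp (cmp h g) f }.
Arguments hom {_}.
Arguments idm {_}.
Arguments cmp {_ _ _ _}.

Definition is_terminal (C : category) (t : C) : Prop :=
  forall a : C, exists! u : hom a t, True.

Definition is_pullback (C : category) (a b c P : C) (f : hom a c) (g : hom b c)
  (p1 : hom P a) (p2 : hom P b) : Prop :=
  cmp f p1 = cmp g p2 /\
  forall (Q : C) (q1 : hom Q a) (q2 : hom Q b), cmp f q1 = cmp g q2 ->
    exists! u : hom Q P, cmp p1 u = q1 /\ cmp p2 u = q2.

Record descent (C : category) (cover : forall a b : C, hom a b -> Prop) : Prop := {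
  dc_terminal : exists t : C, is_terminal t;
  dc_pullbacks : forall (a b c : C) (f : hom a c) (g : hom b c),
      exists (P : C) (p1 : hom P a) (p2 : hom P b), is_pullback f g p1 p2;
  dc_id : forall a : C, cover _ _ (idm a);
  dc_comp : forall (a b c : C) (f : hom a b) (g : hom b c),
      cover _ _ f -> cover _ _ g -> cover _ _ (cmp g f);
  dc_pullback : forall (a b c P : C) (f : hom a c) (g : hom b c)
      (p1 : hom P a) (p2 : hom P b),
      is_pullback f g p1 p2 -> cover _ _ g -> cover _ _ p1;
  dc_cancel : forall (a b c : C) (f : hom a b) (g : hom b c),
      cover _ _ f -> cover _ _ (cmp g f) -> cover _ _ g }.

Record sobj (C : category) := SObj {
  sob :> nat -> C;
  smap : forall m n, dmor m n -> hom (sob n) (sob m);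
  smap_id : forall n, smap (did n) = idm (sob n);
  smap_comp : forall k m n (b : dmor m n) (a : dmor k m),
      smap (dcomp b a) = cmp (smap a) (smap b) }.
Arguments smap {C} s {m n}.

Record smor (C : category) (X Y : sobj C) := SMor {
  scomp :> forall n, hom (X n) (Y n);
  snat : forall m n (b : dmor m n),
      cmp (scomp m) (smap X b) = cmp (smap Y b) (scomp n) }.

Lemma smor_comp_nat (C : category) (X Y Z : sobj C) (g : smor Y Z) (f : smor X Y) m n
  (b : dmor m n) :
  cmp (cmp (g m) (f m)) (smap X b) = cmp (smap Z b) (cmp (g n) (f n)).
Proof.
by rewrite -cmpA snat cmpA snat -cmpA.
Qed.

Definition smor_comp (C : category) (X Y Z : sobj C) (g : smor Y Z) (f : smor X Y)
  : smor X Z := SMor (smor_comp_nat g f).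

(* For W an object, a simplicial map \partial\Delta^k -> Hom(W, X_.) is a family
   cs indexed by the non-surjective b : [m] -> [k], natural in [m]; a simplicial
   map \Delta^k -> Hom(W, Y_.) is a natural family ct indexed by all b : [m]->[k].
   A map W -> Map(\partial\Delta^k -> \Delta^k, f)
        = Map(\partial\Delta^k, X) x_{Map(\partial\Delta^k, Y)} Map(\Delta^k, Y)
   is a pair (cs, ct) with f o cs = ct restricted to the boundary. *)
Definition bcone_ok (C : category) (X Y : sobj C) (f : smor X Y) (k : nat) (W : C)
  (cs : forall m (b : dmor m k), ~~ surjb b -> hom W (X m))
  (ct : forall m, dmor m k -> hom W (Y m)) : Prop :=
  (forall m n (b : dmor n k) (a : dmor m n) (h : ~~ surjb b)
          (h' : ~~ surjb (dcomp b a)),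
      cs m (dcomp b a) h' = cmp (smap X a) (cs n b h)) /\
  (forall m n (b : dmor n k) (a : dmor m n),
      ct m (dcomp b a) = cmp (smap Y a) (ct n b)) /\
  (forall m (b : dmor m k) (h : ~~ surjb b), cmp (f m) (cs m b h) = ct m b).

(* R together with (cs, ct) represents Map(\partial\Delta^k -> \Delta^k, f). *)
Definition is_rel_matching (C : category) (X Y : sobj C) (f : smor X Y) (k : nat) (R : C)
  (cs : forall m (b : dmor m k), ~~ surjb b -> hom R (X m))
  (ct : forall m, dmor m k -> hom R (Y m)) : Prop :=
  bcone_ok f cs ct /\
  forall (W : C) (cs' : forall m (b : dmor m k), ~~ surjb b -> hom W (X m))
         (ct' : forall m, dmor m k -> hom W (Y m)),
    bcone_ok f cs' ct' ->
    exists! u : hom W R,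
      (forall m b h, cmp (cs m b h) u = cs' m b h) /\
      (forall m b, cmp (ct m b) u = ct' m b).

(* f is a hypercover: for every n, the canonical map
   X_n -> Map(\partial\Delta^n -> \Delta^n, f) is a cover. *)
Definition is_hypercover (C : category) (cover : forall a b : C, hom a b -> Prop)
  (X Y : sobj C) (f : smor X Y) : Prop :=
  forall (n : nat) (R : C) (cs : forall m (b : dmor m n), ~~ surjb b -> hom R (X m))
         (ct : forall m, dmor m n -> hom R (Y m)),
    is_rel_matching f cs ct ->
    forall v : hom (X n) R,
      (forall m b h, cmp (cs m b h) v = smap X b) ->
      (forall m b, cmp (ct m b) v = cmp (smap Y b) (f n)) ->
      cover _ _ v.

(* Main.v *)
Require Import Defs.
From mathcomp Require Import all_boot.
From Stdlib Require Import ProofIrrelevance FunctionalExtensionality ClassicalEpsilon.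
Set Implicit Arguments. Unset Strict Implicit. Unset Printing Implicit Defensive.

Section Abstract.
Variable C : category.
Variable cover : forall a b : C, hom a b -> Prop.
Variable HC : descent cover.

Record psh := Psh {
  pt :> C -> Type;
  pres : forall W W' : C, hom W' W -> pt W -> pt W';
  pres_id : forall W p, pres (idm W) p = p;
  pres_comp : forall W W' W'' (u : hom W' W) (u' : hom W'' W') p,
      pres (cmp u u') p = pres u' (pres u p) }.

Record ntr (P Q : psh) := Ntr {
  nt :> forall W, P W -> Q W;
  nt_nat : forall W W' (u : hom W' W) p, nt (@pres P _ _ u p) = @pres Q _ _ u (nt p) }.

Definition rep (P : psh) (R : C) (r : P R) :=
  forall W (p : P W), exists! u : hom W R, @pres P _ _ u r = p.
Definition repble (P : psh) := exists R (r : P R), rep r.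
Definition ncover (P Q : psh) (phi : ntr P Q) :=
  forall R (r : P R) R' (r' : Q R'), rep r -> rep r' ->
  forall v : hom R R', @pres Q _ _ v r' = phi R r -> cover v.

Lemma rep_uniq (P : psh) R (r : P R) W (u u' : hom W R) :
  rep r -> @pres P _ _ u r = @pres P _ _ u' r -> u = u'.
Proof.
move=> hr e; have [u0 [h0 hu]] := hr W (@pres P _ _ u r).
by rewrite -(hu u) // -(hu u') // -e.
Qed.

Lemma iso_cover (a b : C) (v : hom a b) (v' : hom b a) :
  cmp v v' = idm b -> cmp v' v = idm a -> cover v.
Proof.
move=> e1 e2.
have pb : is_pullback (idm b) (idm b) v v.
  split=> // Q q1 q2; rewrite !cmp1m => <-.
  exists (cmp v' q1); split.
    by rewrite cmpA e1 cmp1m.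
  move=> x [hx _]; by rewrite -hx cmpA e2 cmp1m.
exact: (dc_pullback HC pb (dc_id HC b)).
Qed.

Lemma rep_isos (P : psh) R (r : P R) S (s : P S) : rep r -> rep s ->
  exists (i : hom R S) (i' : hom S R), @pres P _ _ i s = r /\ @pres P _ _ i' r = s /\
    cmp i i' = idm S /\ cmp i' i = idm R.
Proof.
move=> hr hs.
have [i [hi _]] := hs R r. have [i' [hi' _]] := hr S s.
exists i, i'; do 2 split => //; split.
  by apply: (rep_uniq hs); rewrite pres_comp hi hi' pres_id.
by apply: (rep_uniq hr); rewrite pres_comp hi' hi pres_id.
Qed.

Lemma ncover_one (P Q : psh) (phi : ntr P Q) R (r : P R) R' (r' : Q R') :
  rep r -> rep r' -> (forall v : hom R R', @pres Q _ _ v r' = phi R r -> cover v) ->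
  ncover phi.
Proof.
move=> hr hr' H S s S' s' hs hs' w hw.
have [i [i' [hi [hi' [e1 e2]]]]] := rep_isos hr hs.
have [j [j' [hj [hj' [e3 e4]]]]] := rep_isos hr' hs'.
have c0 : cover (cmp j' (cmp w i)).
  apply: H; rewrite !pres_comp hj' hw -(nt_nat phi) hi //.
have -> : w = cmp j (cmp (cmp j' (cmp w i)) i').
  by rewrite !cmpA e3 cmp1m -!cmpA e1 cmpm1.
apply: (dc_comp HC) => //.
  apply: (dc_comp HC) => //. exact: (iso_cover e2 e1).
exact: (iso_cover e3 e4).
Qed.

Lemma ncover_iso (P Q : psh) (phi : ntr P Q) (psi : ntr Q P) :
  (forall W p, psi W (phi W p) = p) -> (forall W q, phi W (psi W q) = q) ->
  ncover phi.
Proof.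
move=> e1 e2 R r R' r' hr hr' v hv.
have [v' [hv' _]] := hr R' (psi R' r').
apply: (@iso_cover _ _ v v').
  apply: (rep_uniq hr'); rewrite pres_comp hv -(nt_nat phi) hv' e2 pres_id //.
apply: (rep_uniq hr); rewrite pres_comp hv' -(nt_nat psi) hv e1 pres_id //.
Qed.

Lemma ncover_ext (P Q : psh) (phi psi : ntr P Q) :
  (forall W p, phi W p = psi W p) -> ncover phi -> ncover psi.
Proof. by move=> e h R r R' r' hr hr' v hv; apply: (h _ _ _ _ hr hr'); rewrite e. Qed.

Lemma ncover_comp (P Q S : psh) (phi : ntr P Q) (psi : ntr Q S) (chi : ntr P S) :
  repble Q -> (forall W p, chi W p = psi W (phi W p)) ->
  ncover phi -> ncover psi -> ncover chi.
Proof.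
move=> [RQ [rQ hQ]] e hphi hpsi R r R' r' hr hr' v hv.
have [a [ha _]] := hQ R (phi R r).
have [b [hb _]] := hr' RQ (psi RQ rQ).
have -> : v = cmp b a.
  apply: (rep_uniq hr'); rewrite hv pres_comp hb -(nt_nat psi) ha e //.
apply: (dc_comp HC); [exact: (hphi _ _ _ _ hr hQ) | exact: (hpsi _ _ _ _ hQ hr')].
Qed.

Lemma ncover_cancel (P Q S : psh) (phi : ntr P Q) (psi : ntr Q S) (chi : ntr P S) :
  repble P -> (forall W p, chi W p = psi W (phi W p)) ->
  ncover phi -> ncover chi -> ncover psi.
Proof.
move=> [RP [rP hP]] e hphi hchi R r R' r' hr hr' v hv.
have [a [ha _]] := hr RP (phi RP rP).
apply: (dc_cancel HC (f := a)); first exact: (hphi _ _ _ _ hP hr).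
apply: (hchi _ _ _ _ hP hr'); rewrite pres_comp hv -(nt_nat psi) ha e //.
Qed.

Lemma rep_iso (P Q : psh) (phi : ntr P Q) (psi : ntr Q P) R (r : P R) :
  (forall W p, psi W (phi W p) = p) -> (forall W q, phi W (psi W q) = q) ->
  rep r -> rep (phi R r).
Proof.
move=> e1 e2 hr W q.
have [u [hu hu']] := hr W (psi W q).
exists u; split; first by rewrite -(nt_nat phi) hu e2.
move=> u' h; apply: hu'; by rewrite -h -(nt_nat phi) e1.
Qed.

Lemma repr_iso (P Q : psh) (phi : ntr P Q) (psi : ntr Q P) :
  (forall W p, psi W (phi W p) = p) -> (forall W q, phi W (psi W q) = q) ->
  repble P -> repble Q.
Proof. move=> e1 e2 [R [r hr]]; exists R, (phi R r); exact: rep_iso. Qed.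

Lemma pb_lemma (P1 P2 P3 Q : psh) (al : ntr P1 P3) (be : ntr P2 P3)
  (p1 : ntr Q P1) (p2 : ntr Q P2) :
  (forall W q, al W (p1 W q) = be W (p2 W q)) ->
  (forall W a b, al W a = be W b -> exists! q, p1 W q = a /\ p2 W q = b) ->
  repble P1 -> repble P2 -> repble P3 -> repble Q /\ (ncover be -> ncover p1).
Proof.
move=> comm univ [R1 [r1 h1]] [R2 [r2 h2]] [R3 [r3 h3]].
have [A [hA _]] := h3 R1 (al R1 r1).
have [B [hB _]] := h3 R2 (be R2 r2).
have [P [q1 [q2 pb]]] := dc_pullbacks HC A B.
have e0 : al P (@pres P1 _ _ q1 r1) = be P (@pres P2 _ _ q2 r2).
  rewrite (nt_nat al) (nt_nat be) -hA -hB -!pres_comp; congr pres; exact: pb.1.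
have [q0 [[hq1 hq2] _]] := univ _ _ _ e0.
have repQ : rep q0.
  move=> W q.
  have [u1 [hu1 hu1']] := h1 W (p1 W q).
  have [u2 [hu2 hu2']] := h2 W (p2 W q).
  have eAB : cmp A u1 = cmp B u2.
    apply: (rep_uniq h3); rewrite !pres_comp hA hB -(nt_nat al) -(nt_nat be) hu1 hu2.
    exact: comm.
  have [u [[e1 e2] hu]] := pb.2 W u1 u2 eAB.
  exists u; split.
    have [q' [_ hq']] := univ W (p1 W q) (p2 W q) (comm W q).
    have E : p1 W (@pres Q _ _ u q0) = p1 W q /\ p2 W (@pres Q _ _ u q0) = p2 W q.
      by rewrite (nt_nat p1) (nt_nat p2) hq1 hq2 -!pres_comp e1 e2.
    by rewrite -(hq' _ E) (hq' q).
  move=> u' hu'; apply: hu; split.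
    by apply/esym/hu1'; rewrite pres_comp -hq1 -(nt_nat p1) hu'.
  by apply/esym/hu2'; rewrite pres_comp -hq2 -(nt_nat p2) hu'.
split; first by exists P, q0.
move=> hbe; apply: (@ncover_one _ _ _ _ _ _ _ repQ h1) => v hv.
have -> : v = q1 by apply: (rep_uniq h1); rewrite hv hq1.
apply: (dc_pullback HC pb); exact: (hbe _ _ _ _ h2 h3).
Qed.

Definition yon (X : C) : psh.
refine (@Psh (fun W => hom W X) (fun W W' u x => cmp x u) _ _).
- by move=> W p; rewrite cmpm1.
- by move=> W W' W'' u u' p; rewrite cmpA.
Defined.

Lemma rep_yon (X : C) : rep (P := yon X) (idm X).
Proof.
move=> W p; exists p; split; first by rewrite /= cmp1m.
by move=> u; rewrite /= cmp1m.
Qed.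

End Abstract.

Definition img m n (b : dmor m n) : {set 'I_n.+1} := [set sval b i | i : 'I_m.+1].

Lemma dmor_eq m n (a b : dmor m n) : (forall i, sval a i = sval b i) -> a = b.
Proof.
move=> h; case: a b h => [fa ha] [fb hb] /= h.
have e : fa = fb by apply/ffunP.
subst; congr exist; exact: bool_irrelevance.
Qed.

Lemma img_comp k m n (b : dmor m n) (a : dmor k m) : img (dcomp b a) \subset img b.
Proof.
apply/subsetP => x /imsetP [i _ ->]; rewrite /= ffunE.
by apply/imsetP; exists (sval a i).
Qed.

Lemma surjbE m n (b : dmor m n) : surjb b = (img b == setT).
Proof.
apply/forallP/eqP => [h | h].
  apply/setP => j; rewrite inE; have /existsP [i /eqP <-] := h j.
  by apply/imsetP; exists i.
move=> j; have : j \in img b by rewrite h inE.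
by case/imsetP => i _ ->; apply/existsP; exists i.
Qed.

Lemma dcomp_id_l m n (a : dmor m n) : dcomp (did n) a = a.
Proof. by apply: dmor_eq => i; rewrite /= !ffunE. Qed.
Lemma dcomp_id_r m n (a : dmor m n) : dcomp a (did m) = a.
Proof. by apply: dmor_eq => i; rewrite /= !ffunE. Qed.
Lemma dcompA k l m n (c : dmor m n) (b : dmor l m) (a : dmor k l) :
  dcomp c (dcomp b a) = dcomp (dcomp c b) a.
Proof. by apply: dmor_eq => i; rewrite /= !ffunE. Qed.

Section Sigma.
Variables (n : nat) (A : {set 'I_n.+1}).
Hypothesis hA : 0 < #|A|.
Local Notation k := (#|A|.-1).

Lemma kS : k.+1 = #|A|. Proof. by rewrite prednK. Qed.

Definition sigf : {ffun 'I_k.+1 -> 'I_n.+1} := [ffun i : 'I_k.+1 => nth ord0 (enum A) i].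

Lemma sorted_A : sorted ltn (map val (enum A)).
Proof.
rewrite -[enum _](eq_filter (mem_enum _)).
rewrite -(eq_filter (mem_map val_inj _)) -filter_map.
by rewrite (sorted_filter ltn_trans) // unlock val_ord_enum iota_ltn_sorted.
Qed.

Lemma ord_lt (i : 'I_k.+1) : (i : nat) < size (enum A).
Proof. by apply: leq_trans (ltn_ord i) _; rewrite kS cardE. Qed.

Lemma sig_lt (i j : 'I_k.+1) : i < j -> sigf i < sigf j.
Proof.
move=> hij; rewrite !ffunE.
have si := ord_lt i. have sj := ord_lt j.
rewrite -!(nth_map ord0 0) //.
apply: (sorted_ltn_nth ltn_trans 0 sorted_A) => //; by rewrite inE size_map.
Qed.

Lemma sig_le (i j : 'I_k.+1) : (sigf i <= sigf j) = (i <= j).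
Proof.
case: (ltngtP i j) => h.
- by rewrite ltnW // sig_lt.
- by apply/negbTE; rewrite -ltnNge sig_lt.
- by rewrite (val_inj h) leqnn.
Qed.

Lemma sig_inj : injective sigf.
Proof. by move=> i j e; apply: val_inj; apply/eqP; rewrite eqn_leq -!sig_le e !leqnn. Qed.

Lemma sig_mono : monob sigf.
Proof. by apply/forallP => i; apply/forallP => j; apply/implyP; rewrite sig_le. Qed.

Definition sigm : dmor k n := exist _ sigf sig_mono.

Lemma img_sig : img sigm = A.
Proof.
apply/setP => x; apply/imsetP/idP => [[i _ ->] | hx].
  rewrite /= ffunE -mem_enum; apply: mem_nth; exact: ord_lt.
have hi : index x (enum A) < k.+1 by rewrite kS cardE index_mem mem_enum.
exists (Ordinal hi) => //; by rewrite /= ffunE /= nth_index // mem_enum.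
Qed.

Lemma sig_factor m (b : dmor m n) : img b \subset A ->
  exists a : dmor m k, b = dcomp sigm a.
Proof.
move=> hb.
have hin : forall i, sval b i \in A.
  move=> i; apply: (subsetP hb); by apply/imsetP; exists i.
have hi : forall i, index (sval b i) (enum A) < k.+1.
  by move=> i; rewrite kS cardE index_mem mem_enum.
have e : forall i, sigf (Ordinal (hi i)) = sval b i.
  by move=> i; rewrite ffunE /= nth_index // mem_enum.
pose af := [ffun i => Ordinal (hi i)].
have am : monob af.
  apply/forallP => i; apply/forallP => j; apply/implyP => hij.
  rewrite !ffunE -sig_le !e.
  exact: (implyP (forallP (forallP (svalP b) i) j) hij).
have ea : forall i, af i = Ordinal (hi i) by move=> i; rewrite ffunE.
exists (exist _ af am); apply: dmor_eq => i; by rewrite /= ffunE ea e.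
Qed.

Lemma sig_cancel m (a a' : dmor m k) : dcomp sigm a = dcomp sigm a' -> a = a'.
Proof.
move=> e; apply: dmor_eq => i; apply: sig_inj.
have := congr1 (fun d : dmor m n => sval d i) e; by rewrite /= !ffunE.
Qed.

Lemma img_sig_comp m (a : dmor m k) : (img (dcomp sigm a) == A) = surjb a.
Proof.
rewrite surjbE; apply/eqP/eqP => [h | h].
  apply/setP => j; rewrite inE.
  have H1 : sigf j \in img sigm by apply/imsetP; exists j.
  have : sigf j \in img (dcomp sigm a) by rewrite h; move: H1; rewrite img_sig.
  case/imsetP => i _ e.
  have e' : sigf j = sigf (sval a i) by rewrite e /= [in LHS]ffunE.
  rewrite (sig_inj e'); by apply/imsetP; exists i.
apply/setP => x; transitivity (x \in img sigm); last by rewrite img_sig.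
apply/imsetP/imsetP => [[i _ ->] | [j _ ->]].
  by exists (sval a i); rewrite //= ffunE.
have : j \in img a by rewrite h inE.
case/imsetP => i _ ->; exists i => //; by rewrite /= [RHS]ffunE.
Qed.

Lemma img_sig_sub m (a : dmor m k) : img (dcomp sigm a) \subset A.
Proof. by have := img_comp sigm a; rewrite img_sig. Qed.

End Sigma.

Section M.
Variable C : category.
Variable cover : forall a b : C, hom a b -> Prop.
Variable HC : descent cover.

Section MM.
Variables (X Y : sobj C) (f : smor X Y) (k : nat).

Definition Mt (W : C) := {p : (forall m (b : dmor m k), ~~ surjb b -> hom W (X m)) *
   (forall m, dmor m k -> hom W (Y m)) | bcone_ok f p.1 p.2}.

Lemma bcone_pres W W' (u : hom W' W) cs ct : @bcone_ok C X Y f k W cs ct ->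
  bcone_ok f (fun m b h => cmp (cs m b h) u) (fun m b => cmp (ct m b) u).
Proof.
move=> [h1 [h2 h3]]; split; [|split].
- by move=> m n b a h h'; rewrite h1 cmpA.
- by move=> m n b a; rewrite h2 cmpA.
- by move=> m b h; rewrite cmpA h3.
Qed.

Definition Mpres W W' (u : hom W' W) (p : Mt W) : Mt W' :=
  exist _ (fun m b h => cmp ((sval p).1 m b h) u, fun m b => cmp ((sval p).2 m b) u)
    (bcone_pres u (svalP p)).

Lemma Mt_eq W (p q : Mt W) :
  (forall m b h, (sval p).1 m b h = (sval q).1 m b h) ->
  (forall m b, (sval p).2 m b = (sval q).2 m b) -> p = q.
Proof.
case: p q => [[cs ct] ok] [[cs' ct'] ok'] /= e1 e2.
have E1 : cs = cs'.
  apply: functional_extensionality_dep => m; apply: functional_extensionality_dep => b.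
  apply: functional_extensionality_dep => h; exact: e1.
have E2 : ct = ct'.
  apply: functional_extensionality_dep => m; apply: functional_extensionality_dep => b.
  exact: e2.
subst; congr exist; exact: proof_irrelevance.
Qed.

Definition Mpsh : psh C.
refine (@Psh C Mt Mpres _ _).
- by move=> W p; apply: Mt_eq => /= *; rewrite cmpm1.
- by move=> W W' W'' u u' p; apply: Mt_eq => /= *; rewrite cmpA.
Defined.

Lemma unit_ok W (x : hom W (X k)) :
  bcone_ok f (fun m b (_ : ~~ surjb b) => cmp (smap X b) x)
             (fun m (b : dmor m k) => cmp (smap Y b) (cmp (f k) x)).
Proof.
split; [|split].
- by move=> m n b a h h'; rewrite smap_comp cmpA.
- by move=> m n b a; rewrite smap_comp -cmpA.
- by move=> m b h; rewrite cmpA snat cmpA.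
Qed.

Definition unitM : ntr (yon (X k)) Mpsh.
refine (@Ntr C (yon (X k)) Mpsh (fun W (x : hom W (X k)) => exist _ (fun m b (_ : ~~ surjb b) => cmp (smap X b) x,
   fun m (b : dmor m k) => cmp (smap Y b) (cmp (f k) x)) (unit_ok x) : Mt W) _).
by move=> W W' u p; apply: Mt_eq => /= *; rewrite !cmpA.
Defined.

Lemma relm_rep R (r : Mpsh R) : rep r -> is_rel_matching f (sval r).1 (sval r).2.
Proof.
move=> hr; split; first exact: (svalP r).
move=> W cs' ct' ok.
have [u [hu hu']] := hr W (exist _ (cs', ct') ok).
exists u; split.
  split=> [m b h | m b].
    by have := congr1 (fun p : Mt W => (sval p).1 m b h) hu.
  by have := congr1 (fun p : Mt W => (sval p).2 m b) hu.
move=> u' [e1 e2]; apply: hu'; by apply: Mt_eq => /= *; rewrite ?e1 ?e2.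
Qed.

Lemma hyp_ncover : is_hypercover cover f -> ncover cover unitM.
Proof.
move=> H R r R' r' hr hr' v hv.
have H1 : forall w : hom (X k) R', @pres _ Mpsh _ _ w r' = unitM _ (idm (X k)) -> cover w.
  move=> w hw.
  apply: (H k R' _ _ (relm_rep hr')) => [m b h | m b].
    by have := congr1 (fun p : Mt _ => (sval p).1 m b h) hw; rewrite /= cmpm1.
  by have := congr1 (fun p : Mt _ => (sval p).2 m b) hw; rewrite /= cmpm1.
exact: (ncover_one HC (@rep_yon _ (X k)) hr' H1 hr hr' hv).
Qed.

Lemma ncover_hyp : ncover cover unitM ->
  forall R cs ct, is_rel_matching f cs ct ->
    forall v : hom (X k) R,
      (forall m b h, cmp (cs m b h) v = smap X b) ->
      (forall m b, cmp (ct m b) v = cmp (smap Y b) (f k)) ->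
      cover v.
Proof.
move=> H R cs ct [ok hu] v e1 e2.
have hr : rep (P := Mpsh) (exist _ (cs, ct) ok).
  move=> W p.
  have [u [[h1 h2] hu']] := hu W _ _ (svalP p).
  exists u; split; first by apply: Mt_eq => /= *; rewrite ?h1 ?h2.
  move=> u' e; apply: hu'; split => [m b h | m b].
    by have := congr1 (fun p : Mt W => (sval p).1 m b h) e.
  by have := congr1 (fun p : Mt W => (sval p).2 m b) e.
apply: (H _ _ _ _ (@rep_yon _ (X k)) hr).
by apply: Mt_eq => /= *; rewrite ?e1 ?e2 cmpm1.
Qed.

Lemma relm_repble (R : C) cs ct : @is_rel_matching C X Y f k R cs ct -> repble Mpsh.
Proof.
move=> [ok hu]; exists R, (exist _ (cs, ct) ok).
move=> W p.
have [u [[h1 h2] hu']] := hu W _ _ (svalP p).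
exists u; split; first by apply: Mt_eq => /= *; rewrite ?h1 ?h2.
move=> u' e; apply: hu'; split => [m b h | m b].
  by have := congr1 (fun p : Mt W => (sval p).1 m b h) e.
by have := congr1 (fun p : Mt W => (sval p).2 m b) e.
Qed.

End MM.
End M.

Definition bdec (b : bool) : {b} + {~~ b} :=
  if b as c return {c} + {~~ c} then left erefl else right erefl.
Definition dif (b : bool) (T : Type) (F1 : b -> T) (F2 : T) : T :=
  match bdec b with left h => F1 h | right _ => F2 end.

Lemma dif_true (b : bool) T (F1 : b -> T) F2 (h : b) : dif F1 F2 = F1 h.
Proof. rewrite /dif; case: (bdec b) => [h'|]; [by rewrite (bool_irrelevance h h') | by rewrite h]. Qed.

Lemma dif_false (b : bool) T (F1 : b -> T) F2 : ~~ b -> dif F1 F2 = F2.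
Proof. rewrite /dif; case: (bdec b) => // h; by rewrite h. Qed.

Lemma img_nz m n (b : dmor m n) : img b != set0.
Proof. by apply/set0Pn; exists (sval b ord0); apply/imsetP; exists ord0. Qed.

Section O.
Variable C : category.
Variables (X Y Z : sobj C) (f : smor X Y) (g : smor Y Z) (n : nat).

Section OK.
Variables (K1 K2 : {set {set 'I_n.+1}}).

Definition Oty (W : C) := ((forall m (b : dmor m n), img b \in K1 -> hom W (X m)) *
  (forall m (b : dmor m n), img b \in K2 -> hom W (Y m)) *
  (forall m, dmor m n -> hom W (Z m)))%type.

Definition Ook W (t : Oty W) : Prop :=
 (forall m m' (b : dmor m n) (a : dmor m' m) h h',
     t.1.1 m' (dcomp b a) h' = cmp (smap X a) (t.1.1 m b h)) /\
 (forall m m' (b : dmor m n) (a : dmor m' m) h h',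
     t.1.2 m' (dcomp b a) h' = cmp (smap Y a) (t.1.2 m b h)) /\
 (forall m m' (b : dmor m n) (a : dmor m' m),
     t.2 m' (dcomp b a) = cmp (smap Z a) (t.2 m b)) /\
 (forall m (b : dmor m n) h h', cmp (f m) (t.1.1 m b h) = t.1.2 m b h') /\
 (forall m (b : dmor m n) h, cmp (g m) (t.1.2 m b h) = t.2 m b).

Definition Ot W := {t : Oty W | Ook t}.

Definition cx W (t : Ot W) := (sval t).1.1.
Definition cy W (t : Ot W) := (sval t).1.2.
Definition cz W (t : Ot W) := (sval t).2.
Arguments cx {W} t m b h.
Arguments cy {W} t m b h.
Arguments cz {W} t m b.

Lemma cx_congr W (t : Ot W) m (b b' : dmor m n) h h' : b = b' -> cx t m b h = cx t m b' h'.
Proof. by move=> e; subst; rewrite (bool_irrelevance h h'). Qed.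
Lemma cy_congr W (t : Ot W) m (b b' : dmor m n) h h' : b = b' -> cy t m b h = cy t m b' h'.
Proof. by move=> e; subst; rewrite (bool_irrelevance h h'). Qed.

Lemma natXe W (t : Ot W) m m' (b : dmor m n) (a : dmor m' m) (b' : dmor m' n) h h' :
  b' = dcomp b a -> cx t m' b' h' = cmp (smap X a) (cx t m b h).
Proof. move=> e; subst; exact: (proj1 (svalP t)). Qed.
Lemma natYe W (t : Ot W) m m' (b : dmor m n) (a : dmor m' m) (b' : dmor m' n) h h' :
  b' = dcomp b a -> cy t m' b' h' = cmp (smap Y a) (cy t m b h).
Proof. move=> e; subst; exact: (proj1 (proj2 (svalP t))). Qed.
Lemma natZe W (t : Ot W) m m' (b : dmor m n) (a : dmor m' m) (b' : dmor m' n) :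
  b' = dcomp b a -> cz t m' b' = cmp (smap Z a) (cz t m b).
Proof. move=> e; subst; exact: (proj1 (proj2 (proj2 (svalP t)))). Qed.
Lemma fXe W (t : Ot W) m (b : dmor m n) h h' : cmp (f m) (cx t m b h) = cy t m b h'.
Proof. exact: (proj1 (proj2 (proj2 (proj2 (svalP t))))). Qed.
Lemma gYe W (t : Ot W) m (b : dmor m n) h : cmp (g m) (cy t m b h) = cz t m b.
Proof. exact: (proj2 (proj2 (proj2 (proj2 (svalP t))))). Qed.

Lemma Ot_eq W (p q : Ot W) :
  (forall m b h, cx p m b h = cx q m b h) ->
  (forall m b h, cy p m b h = cy q m b h) ->
  (forall m b, cz p m b = cz q m b) -> p = q.
Proof.
case: p q => [[[x1 y1] z1] ok] [[[x2 y2] z2] ok'] /= e1 e2 e3.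
have E1 : x1 = x2.
  apply: functional_extensionality_dep => m; apply: functional_extensionality_dep => b.
  apply: functional_extensionality_dep => h; exact: e1.
have E2 : y1 = y2.
  apply: functional_extensionality_dep => m; apply: functional_extensionality_dep => b.
  apply: functional_extensionality_dep => h; exact: e2.
have E3 : z1 = z2.
  apply: functional_extensionality_dep => m; apply: functional_extensionality_dep => b.
  exact: e3.
subst; congr exist; exact: proof_irrelevance.
Qed.

Definition mkO W (x : forall m (b : dmor m n), img b \in K1 -> hom W (X m))
  (y : forall m (b : dmor m n), img b \in K2 -> hom W (Y m))
  (z : forall m, dmor m n -> hom W (Z m)) (ok : Ook (x, y, z)) : Ot W :=
  exist _ (x, y, z) ok.

Lemma Opres_ok W W' (u : hom W' W) (t : Ot W) :
  Ook ((fun m b h => cmp (cx t m b h) u), (fun m b h => cmp (cy t m b h) u),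
       (fun m b => cmp (cz t m b) u)).
Proof.
split; [|split; [|split; [|split]]] => /=.
- by move=> m m' b a h h'; rewrite (natXe (a := a) _ h h') // cmpA.
- by move=> m m' b a h h'; rewrite (natYe (a := a) _ h h') // cmpA.
- by move=> m m' b a; rewrite (natZe (a := a) _ (erefl _)) cmpA.
- by move=> m b h h'; rewrite cmpA (fXe _ _ h').
- by move=> m b h; rewrite cmpA gYe.
Qed.

Definition Opres W W' (u : hom W' W) (t : Ot W) : Ot W' := exist _ _ (Opres_ok u t).

Definition Opsh : psh C.
refine (@Psh C Ot Opres _ _).
- by move=> W p; apply: Ot_eq => /= *; rewrite /cx /cy /cz /= cmpm1.
- by move=> W W' W'' u u' p; apply: Ot_eq => /= *; rewrite /cx /cy /cz /= cmpA.
Defined.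

End OK.

Arguments cx {K1 K2 W} t m b h.
Arguments cy {K1 K2 W} t m b h.
Arguments cz {K1 K2 W} t m b.

Section Restr.
Variables (K K' K2 : {set {set 'I_n.+1}}) (H : K \subset K').

Definition restr_f W (t : Ot K' K2 W) : Ot K K2 W.
refine (exist _ ((fun m b h => cx t m b (subsetP H _ h)), cy t, cz t) _).
split; [|split; [|split; [|split]]] => /=.
- by move=> m m' b a h h'; apply: natXe.
- by move=> m m' b a h h'; apply: natYe.
- by move=> m m' b a; apply: natZe.
- by move=> m b h h'; apply: fXe.
- by move=> m b h; apply: gYe.
Defined.

Lemma cx_restr W (t : Ot K' K2 W) m b h : cx (restr_f t) m b h = cx t m b (subsetP H _ h).
Proof. by []. Qed.
Lemma cy_restr W (t : Ot K' K2 W) m b h : cy (restr_f t) m b h = cy t m b h.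
Proof. by []. Qed.
Lemma cz_restr W (t : Ot K' K2 W) m b : cz (restr_f t) m b = cz t m b.
Proof. by []. Qed.

Definition restr : ntr (Opsh K' K2) (Opsh K K2).
refine (@Ntr C (Opsh K' K2) (Opsh K K2) restr_f _).
by move=> W W' u p; apply: Ot_eq.
Defined.
End Restr.

End O.
Arguments cx {C X Y Z f g n K1 K2 W} t m b h.
Arguments cy {C X Y Z f g n K1 K2 W} t m b h.
Arguments cz {C X Y Z f g n K1 K2 W} t m b.

Section Step.
Variable C : category.
Variable cover : forall a b : C, hom a b -> Prop.
Variable HC : descent cover.
Variables (X Y Z : sobj C) (f : smor X Y) (g : smor Y Z) (n : nat).
Variables (K K2 : {set {set 'I_n.+1}}) (A : {set 'I_n.+1}).
Hypotheses (hAK : A \in K) (hA : 0 < #|A|)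
  (dcK : forall B B' : {set 'I_n.+1}, B' \subset B -> B' != set0 -> B \in K -> B' \in K)
  (maxA : forall B : {set 'I_n.+1}, B \in K -> A \subset B -> B = A)
  (hK2 : K \subset K2)
  (dc2 : forall B B' : {set 'I_n.+1}, B' \subset B -> B' != set0 -> B \in K2 -> B' \in K2).

Local Notation K0 := (K :\ A).
Local Notation k := (#|A|.-1).
Local Notation s := (sigm hA).
Local Notation O := (Opsh f g).

Lemma dcK0 (B B' : {set 'I_n.+1}) : B' \subset B -> B' != set0 -> B \in K0 -> B' \in K0.
Proof.
move=> sub nz; rewrite !in_setD1 => /andP [nB hB]; rewrite (dcK sub nz hB) andbT.
apply/negP => /eqP e; subst B'; by rewrite (maxA hB sub) eqxx in nB.
Qed.

Lemma K0K : K0 \subset K. Proof. exact: subsetDl. Qed.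

Lemma K0_face m (a : dmor m k) : ~~ surjb a -> img (dcomp s a) \in K0.
Proof.
move=> ns; rewrite in_setD1 img_sig_comp ns /=.
exact: (dcK (img_sig_sub hA a) (img_nz _) hAK).
Qed.

Lemma K2_sig m (a : dmor m k) : img (dcomp s a) \in K2.
Proof. exact: (dc2 (img_sig_sub hA a) (img_nz _) (subsetP hK2 _ hAK)). Qed.

Lemma K_s : img s \in K. Proof. by rewrite img_sig. Qed.
Lemma K2_s : img s \in K2. Proof. exact: (subsetP hK2 _ K_s). Qed.

Lemma notK0 m (b : dmor m n) : img b \in K -> img b \notin K0 -> img b = A.
Proof. by move=> h; rewrite in_setD1 h andbT negbK => /eqP. Qed.

Definition alpha_f W (t : O K0 K2 W) : Mpsh f k W.
refine (exist _ (fun m a h => cx t m (dcomp s a) (K0_face h),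
                 fun m a => cy t m (dcomp s a) (K2_sig a)) _).
split; [|split] => /=.
- by move=> m m' b a h h'; apply: natXe; rewrite dcompA.
- by move=> m m' b a; apply: natYe; rewrite dcompA.
- by move=> m b h; apply: fXe.
Defined.

Definition alpha : ntr (O K0 K2) (Mpsh f k).
refine (@Ntr C (O K0 K2) (Mpsh f k) alpha_f _).
by move=> W W' u p; apply: Mt_eq.
Defined.

Definition pi2 : ntr (O K K2) (yon (X k)).
refine (@Ntr C (O K K2) (yon (X k)) (fun W t => cx t k s K_s) _).
by move=> W W' u p.
Defined.

Lemma d0_mono m : monob [ffun _ : 'I_m.+1 => (ord0 : 'I_k.+1)].
Proof. by apply/forallP => i; apply/forallP => j; rewrite !ffunE leqnn implybT. Qed.
Definition d0 m : dmor m k := exist (fun f0 => monob f0) _ (d0_mono m).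

Definition fct m (b : dmor m n) : dmor m k :=
  epsilon (inhabits (d0 m)) (fun a => b = dcomp s a).

Lemma fct_spec m (b : dmor m n) : img b \subset A -> b = dcomp s (fct b).
Proof. move=> h; apply: (epsilon_spec (inhabits (d0 m)) (fun a => b = dcomp s a)); exact: sig_factor. Qed.

Lemma comm_ap W (q : O K K2 W) : alpha W (restr f g K2 K0K W q) = unitM f k W (pi2 W q).
Proof.
apply: Mt_eq => /= [m a h | m a].
  by rewrite cx_restr; apply: natXe.
rewrite cy_restr (fXe q K_s K2_s); by apply: natYe.
Qed.

Section Univ.
Variables (W : C) (t0 : O K0 K2 W) (x : hom W (X k)).
Hypothesis E : alpha W t0 = unitM f k W x.

Lemma E1 m (a : dmor m k) h : cx t0 m (dcomp s a) (K0_face h) = cmp (smap X a) x.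
Proof. by have := congr1 (fun p : Mt f k W => (sval p).1 m a h) E. Qed.
Lemma E2 m (a : dmor m k) : cy t0 m (dcomp s a) (K2_sig a) = cmp (smap Y a) (cmp (f k) x).
Proof. by have := congr1 (fun p : Mt f k W => (sval p).2 m a) E. Qed.

Definition ext_x m (b : dmor m n) (h : img b \in K) : hom W (X m) :=
  dif (fun h0 : img b \in K0 => cx t0 m b h0) (cmp (smap X (fct b)) x).

Arguments ext_x : clear implicits.
Lemma ext_in m (b : dmor m n) (h : img b \in K) (h0 : img b \in K0) : ext_x m b h = cx t0 m b h0.
Proof. exact: dif_true. Qed.
Lemma ext_out m (b : dmor m n) (h : img b \in K) : img b \notin K0 -> ext_x m b h = cmp (smap X (fct b)) x.
Proof. exact: dif_false. Qed.

Lemma ext_A m (b : dmor m n) (h : img b \in K) (hb : img b \notin K0) :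
  b = dcomp s (fct b) /\ surjb (fct b).
Proof.
have eA := notK0 h hb.
have eb : b = dcomp s (fct b) by apply: fct_spec; rewrite eA.
split=> //; by rewrite -img_sig_comp -eb eA.
Qed.

Lemma ext_ok : Ook f g (ext_x, cy t0, cz t0).
Proof.
split; [|split; [|split; [|split]]] => /=.
- move=> m m' b a h h'.
  case: (boolP (img b \in K0)) => hb.
    have hba : img (dcomp b a) \in K0 := dcK0 (img_comp b a) (img_nz _) hb.
    rewrite (ext_in _ hba) (ext_in _ hb); exact: natXe.
  have [eb sb] := ext_A h hb.
  have eA := notK0 h hb.
  rewrite (ext_out _ hb).
  have eba : dcomp b a = dcomp s (dcomp (fct b) a) by rewrite {1}eb dcompA.
  case: (boolP (img (dcomp b a) \in K0)) => hba.
    rewrite (ext_in _ hba).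
    have ns : ~~ surjb (dcomp (fct b) a).
      apply/negP => sj; move: hba; rewrite eba in_setD1.
      by rewrite (eqP (etrans (img_sig_comp _ _) sj)) eqxx.
    rewrite (cx_congr _ _ (K0_face ns) eba) E1 smap_comp -cmpA //.
  rewrite (ext_out _ hba).
  have -> : fct (dcomp b a) = dcomp (fct b) a.
    apply: (@sig_cancel _ _ hA); rewrite -eba -fct_spec //.
    by rewrite -eA; exact: img_comp.
  by rewrite smap_comp -cmpA.
- move=> m m' b a h h'; exact: natYe.
- move=> m m' b a; exact: natZe.
- move=> m b h h'.
  case: (boolP (img b \in K0)) => hb.
    rewrite (ext_in _ hb); exact: fXe.
  have [eb sb] := ext_A h hb.
  rewrite (ext_out _ hb) cmpA snat -cmpA -E2.
  by apply: cy_congr.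
- move=> m b h; exact: gYe.
Qed.

Definition q0 : O K K2 W := exist _ (ext_x, cy t0, cz t0) ext_ok.

Lemma cx_q0 m b h : cx q0 m b h = ext_x m b h. Proof. by []. Qed.

Lemma q0_p1 : restr f g K2 K0K W q0 = t0.
Proof.
apply: Ot_eq => //= m b h; by rewrite cx_restr cx_q0 (ext_in _ h).
Qed.

Lemma fct_s : fct s = did k.
Proof.
apply: (@sig_cancel _ _ hA); rewrite -fct_spec ?img_sig // dcomp_id_r //.
Qed.

Lemma q0_p2 : pi2 W q0 = x.
Proof.
rewrite /= cx_q0 ext_out; last by rewrite in_setD1 img_sig eqxx.
by rewrite fct_s smap_id cmp1m.
Qed.

Lemma q0_uniq (q : O K K2 W) : restr f g K2 K0K W q = t0 -> pi2 W q = x -> q = q0.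
Proof.
move=> e1 e2; apply: Ot_eq.
- move=> m b h; rewrite cx_q0.
  case: (boolP (img b \in K0)) => hb.
    rewrite (ext_in _ hb) -e1 /= cx_restr.
    by rewrite (bool_irrelevance h (subsetP K0K _ hb)).
  have [eb sb] := ext_A h hb.
  rewrite (ext_out _ hb) -e2 /=; exact: natXe.
- by move=> m b h; transitivity (cy t0 m b h) => //; rewrite -e1.
- by move=> m b; transitivity (cz t0 m b) => //; rewrite -e1.
Qed.

End Univ.

Lemma step : repble (O K0 K2) -> repble (Mpsh f k) -> ncover cover (unitM f k) ->
  repble (O K K2) /\ ncover cover (restr f g K2 K0K).
Proof.
move=> r1 r3 hc.
have r2 : repble (yon (X k)) by exists (X k), (idm (X k)); exact: rep_yon.
have := @pb_lemma C cover HC _ _ _ _ alpha (unitM f k) (restr f g K2 K0K) pi2 comm_ap _ r1 r2 r3.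
case=> [W t x e|rQ hQ]; last by split=> //; exact: hQ.
exists (q0 e); split; first by split; [exact: q0_p1 | exact: q0_p2].
by move=> q [e1 e2]; rewrite (q0_uniq e e1 e2).
Qed.

End Step.

Section Filt.
Variable C : category.
Variable cover : forall a b : C, hom a b -> Prop.
Variable HC : descent cover.
Variables (X Y Z : sobj C) (f : smor X Y) (g : smor Y Z) (n : nat).
Variable K2 : {set {set 'I_n.+1}}.
Hypothesis dc2 : forall B B' : {set 'I_n.+1}, B' \subset B -> B' != set0 -> B \in K2 -> B' \in K2.
Hypothesis hM : forall k, k < n -> repble (Mpsh f k) /\ ncover cover (unitM f k).
Hypothesis r0 : repble (Opsh f g set0 K2).

Lemma restr_comp (K K' K'' : {set {set 'I_n.+1}}) (H1 : K \subset K') (H2 : K' \subset K'')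
  (H3 : K \subset K'') W (q : Opsh f g K'' K2 W) :
  restr f g K2 H3 W q = restr f g K2 H1 W (restr f g K2 H2 W q).
Proof. by apply: Ot_eq => //= m b h; rewrite !cx_restr; apply: cx_congr. Qed.

Lemma filt_aux N : forall K : {set {set 'I_n.+1}}, #|K| <= N ->
  (forall B B' : {set 'I_n.+1}, B' \subset B -> B' != set0 -> B \in K -> B' \in K) ->
  K \subset K2 -> set0 \notin K -> setT \notin K ->
  repble (Opsh f g K K2) /\ ncover cover (restr f g K2 (sub0set K)).
Proof.
elim: N => [|N IH] K hN dcK hK2 n0 nT.
  have e : K = set0 by apply/eqP; rewrite -cards_eq0 -leqn0.
  subst K; split => //.
  apply: (@ncover_iso _ _ HC _ _ _ (restr f g K2 (sub0set set0))) => W p;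
    by apply: Ot_eq => //= m b h; rewrite !cx_restr; apply: cx_congr.
case: (set_0Vmem K) => [e | [B0 hB0]].
  subst K; split => //.
  apply: (@ncover_iso _ _ HC _ _ _ (restr f g K2 (sub0set set0))) => W p;
    by apply: Ot_eq => //= m b h; rewrite !cx_restr; apply: cx_congr.
pose A := [arg max_(B > B0 in K) #|B|].
have [hAK hmax] : A \in K /\ forall B, B \in K -> #|B| <= #|A|.
  by rewrite /A; case: arg_maxnP.
have maxA : forall B, B \in K -> A \subset B -> B = A.
  move=> B hB sub; apply/esym/eqP; by rewrite eqEcard sub hmax.
have hA : 0 < #|A| by rewrite card_gt0; apply: contraNneq n0 => <-.
have kn : #|A|.-1 < n.
  have : A \proper setT by rewrite properT; apply: contraNneq nT => <-.
  move/proper_card; rewrite cardsT card_ord => h.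
  by rewrite prednK // -ltnS.
have dcK0 := dcK0 dcK maxA.
have hcard : #|K :\ A| <= N.
  by move: hN; rewrite (cardsD1 A K) hAK add1n ltnS.
have n0' : set0 \notin K :\ A by rewrite in_setD1 (negbTE n0) andbF.
have nT' : setT \notin K :\ A by rewrite in_setD1 (negbTE nT) andbF.
have [r1 c1] := IH (K :\ A) hcard dcK0 (subset_trans (@K0K _ K A) hK2) n0' nT'.
have [rM cM] := hM kn.
have [rK cK] := step HC hAK hA dcK maxA hK2 dc2 r1 rM cM.
split => //.
apply: (ncover_comp HC (phi := restr f g K2 (@K0K _ K A))
         (psi := restr f g K2 (sub0set (K :\ A))) r1 _ cK c1).
move=> W p; exact: restr_comp.
Qed.

Lemma filt (K : {set {set 'I_n.+1}}) :
  (forall B B' : {set 'I_n.+1}, B' \subset B -> B' != set0 -> B \in K -> B' \in K) ->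
  K \subset K2 -> set0 \notin K -> setT \notin K ->
  repble (Opsh f g K K2) /\ ncover cover (restr f g K2 (sub0set K)).
Proof. exact: (@filt_aux #|K| K (leqnn _)). Qed.
End Filt.

Section Isos.
Variable C : category.
Variables (X Y Z : sobj C) (f : smor X Y) (g : smor Y Z) (n : nat).

Definition Bd : {set {set 'I_n.+1}} := [set B | (B != setT) && (B != set0)].

Lemma bdE m (b : dmor m n) : (img b \in Bd) = ~~ surjb b.
Proof. by rewrite inE img_nz andbT surjbE. Qed.
Lemma bd1 m (b : dmor m n) : img b \in Bd -> ~~ surjb b. Proof. by rewrite bdE. Qed.
Lemma bd2 m (b : dmor m n) : ~~ surjb b -> img b \in Bd. Proof. by rewrite bdE. Qed.
Lemma nin0 m (b : dmor m n) : img b \in (set0 : {set {set 'I_n.+1}}) -> False.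
Proof. by rewrite in_set0. Qed.
Lemma inT m (b : dmor m n) : img b \in (setT : {set {set 'I_n.+1}}).
Proof. by rewrite in_setT. Qed.

Lemma dcBd (B B' : {set 'I_n.+1}) : B' \subset B -> B' != set0 -> B \in Bd -> B' \in Bd.
Proof.
move=> sub nz; rewrite !inE nz andbT => /andP [hB _]; apply: contra hB => /eqP e.
by rewrite -subTset -e.
Qed.
Lemma dcT (B B' : {set 'I_n.+1}) : B' \subset B -> B' != set0 ->
  B \in (setT : {set {set 'I_n.+1}}) -> B' \in (setT : {set {set 'I_n.+1}}).
Proof. by rewrite !in_setT. Qed.
Lemma Bd0 : set0 \notin Bd. Proof. by rewrite inE eqxx andbF. Qed.
Lemma BdT : setT \notin Bd. Proof. by rewrite inE eqxx. Qed.

Local Notation O := (Opsh f g).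
Local Notation gf := (smor_comp g f).
Local Notation S0 := (set0 : {set {set 'I_n.+1}}).
Local Notation ST := (setT : {set {set 'I_n.+1}}).

Definition isoA_f W (p : Mpsh gf n W) : O Bd Bd W.
refine (exist _ ((fun m b h => (sval p).1 m b (bd1 h)),
                 (fun m b h => cmp (f m) ((sval p).1 m b (bd1 h))), (sval p).2) _).
have [h1 [h2 h3]] := svalP p.
split; [|split; [|split; [|split]]] => /=.
- by move=> *; apply: h1.
- by move=> m m' b a h h'; rewrite (h1 _ _ _ _ (bd1 h)) cmpA snat -cmpA.
- by move=> *; apply: h2.
- by move=> m b h h'; rewrite (bool_irrelevance h h').
- by move=> m b h; rewrite cmpA -(h3 _ _ (bd1 h)).
Defined.

Definition isoA_b W (t : O Bd Bd W) : Mpsh gf n W.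
refine (exist _ ((fun m b h => cx t m b (bd2 h)), cz t) _).
split; [|split] => /=.
- by move=> m m' b a h h'; apply: natXe.
- by move=> m m' b a; apply: natZe.
- by move=> m b h; rewrite -cmpA (fXe t _ (bd2 h)) gYe.
Defined.

Definition isoA : ntr (Mpsh gf n) (O Bd Bd).
refine (@Ntr C _ _ isoA_f _).
by move=> W W' u p; apply: Ot_eq => //= *; rewrite /cy /= cmpA.
Defined.
Definition isoAi : ntr (O Bd Bd) (Mpsh gf n).
refine (@Ntr C _ _ isoA_b _).
by move=> W W' u p; apply: Mt_eq.
Defined.
Lemma isoA1 W p : isoAi W (isoA W p) = p.
Proof. by apply: Mt_eq => //= m b h; rewrite /cx /= (bool_irrelevance (bd1 (bd2 h)) h). Qed.
Lemma isoA2 W t : isoA W (isoAi W t) = t.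
Proof.
apply: Ot_eq.
- move=> m b h; rewrite /cx /=; by rewrite (bool_irrelevance (bd2 (bd1 h)) h).
- move=> m b h; rewrite /cy /=; exact: fXe.
- by [].
Qed.

Definition isoB_f W (p : Mpsh g n W) : O set0 Bd W.
refine (exist _ ((fun m b h => False_rect _ (nin0 h)),
                 (fun m b h => (sval p).1 m b (bd1 h)), (sval p).2) _).
have [h1 [h2 h3]] := svalP p.
split; [|split; [|split; [|split]]] => /=.
- by move=> m m' b a h; case: (nin0 h).
- by move=> *; apply: h1.
- by move=> *; apply: h2.
- by move=> m b h; case: (nin0 h).
- by move=> m b h; apply: h3.
Defined.

Definition isoB_b W (t : O set0 Bd W) : Mpsh g n W.
refine (exist _ ((fun m b h => cy t m b (bd2 h)), cz t) _).
split; [|split] => /=.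
- by move=> m m' b a h h'; apply: natYe.
- by move=> m m' b a; apply: natZe.
- by move=> m b h; apply: gYe.
Defined.

Definition isoB : ntr (Mpsh g n) (O set0 Bd).
refine (@Ntr C _ _ isoB_f _).
by move=> W W' u p; apply: Ot_eq => //= m b h; case: (nin0 h).
Defined.
Definition isoBi : ntr (O set0 Bd) (Mpsh g n).
refine (@Ntr C _ _ isoB_b _).
by move=> W W' u p; apply: Mt_eq.
Defined.
Lemma isoB1 W p : isoBi W (isoB W p) = p.
Proof. by apply: Mt_eq => //= m b h; rewrite /cx /cy /= (bool_irrelevance (bd1 (bd2 h)) h). Qed.
Lemma isoB2 W t : isoB W (isoBi W t) = t.
Proof.
apply: Ot_eq.
- move=> m b h; by case: (nin0 h).
- move=> m b h; by rewrite /cy /= (bool_irrelevance (bd2 (bd1 h)) h).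
- by [].
Qed.

Definition isoC_f W (p : Mpsh f n W) : O Bd setT W.
refine (exist _ ((fun m b h => (sval p).1 m b (bd1 h)),
                 (fun m b _ => (sval p).2 m b),
                 (fun m b => cmp (g m) ((sval p).2 m b))) _).
have [h1 [h2 h3]] := svalP p.
split; [|split; [|split; [|split]]] => /=.
- by move=> *; apply: h1.
- by move=> *; apply: h2.
- by move=> m m' b a; rewrite h2 cmpA snat -cmpA.
- by move=> m b h h'; apply: h3.
- by [].
Defined.

Definition isoC_b W (t : O Bd setT W) : Mpsh f n W.
refine (exist _ ((fun m b h => cx t m b (bd2 h)), (fun m b => cy t m b (inT b))) _).
split; [|split] => /=.
- by move=> m m' b a h h'; apply: natXe.
- by move=> m m' b a; apply: natYe.
- by move=> m b h; apply: fXe.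
Defined.

Definition isoC : ntr (Mpsh f n) (O Bd setT).
refine (@Ntr C _ _ isoC_f _).
by move=> W W' u p; apply: Ot_eq => //= *; rewrite /cz /= cmpA.
Defined.
Definition isoCi : ntr (O Bd setT) (Mpsh f n).
refine (@Ntr C _ _ isoC_b _).
by move=> W W' u p; apply: Mt_eq.
Defined.
Lemma isoC1 W p : isoCi W (isoC W p) = p.
Proof. by apply: Mt_eq => //= m b h; rewrite /cx /cy /= (bool_irrelevance (bd1 (bd2 h)) h). Qed.
Lemma isoC2 W t : isoC W (isoCi W t) = t.
Proof.
apply: Ot_eq.
- move=> m b h; rewrite /cx /=; by rewrite (bool_irrelevance (bd2 (bd1 h)) h).
- move=> m b h; rewrite /cy /=; by rewrite (bool_irrelevance (inT b) h).
- move=> m b; rewrite /cz /=; exact: gYe.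
Qed.

Definition isoD_f W (y : hom W (Y n)) : O S0 ST W.
refine (exist _ ((fun m b h => False_rect _ (nin0 h)),
                 (fun m b _ => cmp (smap Y b) y),
                 (fun m b => cmp (smap Z b) (cmp (g n) y))) _).
split; [|split; [|split; [|split]]] => /=.
- by move=> m m' b a h; case: (nin0 h).
- by move=> *; rewrite smap_comp -cmpA.
- by move=> *; rewrite smap_comp -cmpA.
- by move=> m b h; case: (nin0 h).
- by move=> m b h; rewrite cmpA snat -cmpA.
Defined.

Definition isoD : ntr (yon (Y n)) (O S0 ST).
refine (@Ntr C (yon (Y n)) _ isoD_f _).
by move=> W W' u p; apply: Ot_eq => [m b h|m b h|m b] /=; [case: (nin0 h) | rewrite /Opres /cy /= cmpA | rewrite /Opres /cz /= !cmpA].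
Defined.
Definition isoDi : ntr (O S0 ST) (yon (Y n)).
refine (@Ntr C (O S0 ST) (yon (Y n)) (fun W (t : Ot f g S0 ST W) => cy t n (did n) (inT _)) _).
by move=> W W' u p.
Defined.
Lemma isoD1 W p : isoDi W (isoD W p) = p.
Proof. by rewrite /= /cy /= smap_id cmp1m. Qed.
Lemma isoD2 W t : isoD W (isoDi W t) = t.
Proof.
apply: Ot_eq.
- move=> m b h; by case: (nin0 h).
- move=> m b h; rewrite /cy /=; by apply/esym/natYe; rewrite dcomp_id_l.
- move=> m b; rewrite /cz /= (gYe t (inT (did n))); by apply/esym/natZe; rewrite dcomp_id_l.
Qed.

End Isos.

Arguments ncover_ext {C cover P Q phi psi} _ _ _ _ _ _ _ _ _ _.
Arguments ncover_iso {C cover} HC {P Q phi psi} _ _ _ _ _ _ _ _ _ _.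
Arguments ncover_comp {C cover} HC {P Q S phi psi chi} _ _ _ _ _ _ _ _ _ _ _ _.
Arguments ncover_cancel {C cover} HC {P Q S phi psi chi} _ _ _ _ _ _ _ _ _ _ _ _.
Arguments hyp_ncover {C cover} HC {X Y f k} _ _ _ _ _ _ _ _ _.

Definition ncomp (C : category) (P Q S : psh C) (phi : ntr P Q) (psi : ntr Q S) : ntr P S.
refine (@Ntr C P S (fun W p => psi W (phi W p)) _).
by move=> W W' u p; rewrite !nt_nat.
Defined.

Definition yonf (C : category) (A B : C) (h : hom A B) : ntr (yon A) (yon B).
refine (@Ntr C (yon A) (yon B) (fun W (x : hom W A) => cmp h x) _).
by move=> W W' u p; rewrite /= cmpA.
Defined.

Lemma repble_yon (C : category) (A : C) : repble (yon A).
Proof. exists A, (idm A); exact: rep_yon. Qed.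

Theorem main (C : category) (cover : forall a b : C, hom a b -> Prop)
  (HC : descent cover) (X Y Z : sobj C) (f : smor X Y) (g : smor Y Z) :
  is_hypercover cover f -> is_hypercover cover (smor_comp g f) ->
  is_hypercover cover g.
Proof.
move=> hf hgf.
have cf : forall k, ncover cover (unitM f k) by move=> k; exact (hyp_ncover HC hf).
have repM : forall k, repble (Mpsh f k).
  elim/ltn_ind => k IH.
  have r0 : repble (Opsh f g (set0 : {set {set 'I_k.+1}}) setT).
    exact: (repr_iso (isoD1 f g (n:=k)) (isoD2 (f:=f) (g:=g) (n:=k)) (repble_yon (Y k))).
  have hM : forall j, j < k -> repble (Mpsh f j) /\ ncover cover (unitM f j).
    by move=> j hj; split; [exact: IH | exact: cf].
  have [rO _] := filt HC (@dcT k) hM r0 (@dcBd k) (subsetT _) (@Bd0 k) (@BdT k).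
  exact: (repr_iso (isoC2 (f:=f) (g:=g) (n:=k)) (isoC1 (f:=f) g (n:=k)) rO).
move=> n R cs ct hm v e1 e2.
apply: (ncover_hyp _ hm e1 e2).
have rMg : repble (Mpsh g n) := relm_repble hm.
have rO0 : repble (Opsh f g (set0 : {set {set 'I_n.+1}}) (Bd n)).
  exact: (repr_iso (isoB1 f (g:=g) (n:=n)) (isoB2 (f:=f) (g:=g) (n:=n)) rMg).
have hM : forall j, j < n -> repble (Mpsh f j) /\ ncover cover (unitM f j).
  by move=> j hj; split; [exact: repM | exact: cf].
have [rOBd cG] := filt HC (@dcBd n) hM rO0 (@dcBd n) (subxx _) (@Bd0 n) (@BdT n).
have r0T : repble (Opsh f g (set0 : {set {set 'I_n.+1}}) setT).
  exact: (repr_iso (isoD1 f g (n:=n)) (isoD2 (f:=f) (g:=g) (n:=n)) (repble_yon (Y n))).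
have [rOT cF] := filt HC (@dcT n) hM r0T (@dcBd n) (subsetT _) (@Bd0 n) (@BdT n).
have c1 : ncover cover (yonf (f n)).
  have a1 := ncover_comp HC (chi := ncomp (unitM f n) (isoC f g n))
     (repM n) (fun _ _ => erefl) (cf n) (ncover_iso HC (isoC1 (f:=f) g (n:=n)) (isoC2 (f:=f) (g:=g) (n:=n))).
  have a2 := ncover_comp HC (chi := ncomp (ncomp (unitM f n) (isoC f g n)) (restr f g _ (sub0set (Bd n))))
     rOT (fun _ _ => erefl) a1 cF.
  have a3 := ncover_comp HC (chi := ncomp (ncomp (ncomp (unitM f n) (isoC f g n)) (restr f g _ (sub0set (Bd n)))) (isoDi f g n))
     r0T (fun _ _ => erefl) a2 (ncover_iso HC (isoD2 (f:=f) (g:=g) (n:=n)) (isoD1 f g (n:=n))).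
  apply: (ncover_ext _ a3) => W x /=.
  by rewrite cy_restr /cy /isoC_f /= smap_id cmp1m.
have c2 : ncover cover (ncomp (yonf (f n)) (unitM g n)).
  have a1 := ncover_comp HC (chi := ncomp (unitM (smor_comp g f) n) (isoA f g n))
     (repr_iso (isoA2 (f:=f) (g:=g) (n:=n)) (isoA1 (f:=f) (g:=g) (n:=n)) rOBd) (fun _ _ => erefl) (hyp_ncover HC hgf)
     (ncover_iso HC (isoA1 (f:=f) (g:=g) (n:=n)) (isoA2 (f:=f) (g:=g) (n:=n))).
  have a2 := ncover_comp HC (chi := ncomp (ncomp (unitM (smor_comp g f) n) (isoA f g n)) (restr f g _ (sub0set (Bd n))))
     rOBd (fun _ _ => erefl) a1 cG.
  have a3 := ncover_comp HC (chi := ncomp (ncomp (ncomp (unitM (smor_comp g f) n) (isoA f g n)) (restr f g _ (sub0set (Bd n)))) (isoBi f g n))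
     rO0 (fun _ _ => erefl) a2 (ncover_iso HC (isoB2 (f:=f) (g:=g) (n:=n)) (isoB1 f (g:=g) (n:=n))).
  apply: (ncover_ext _ a3) => W x /=.
  apply: Mt_eq => /= [m b h | m b].
    by rewrite cy_restr /cy /isoA_f /= [LHS]cmpA snat -cmpA.
  by rewrite cz_restr /cz /isoA_f /= -cmpA.
exact (ncover_cancel HC (phi := yonf (f n)) (psi := unitM g n) (chi := ncomp (yonf (f n)) (unitM g n)) (repble_yon (X n)) (fun _ _ => erefl) c1 c2).
Qed.

Theorem lemma3p18 (C : category) (cover : forall a b : C, hom a b -> Prop)
  (HC : descent cover) (X Y Z : sobj C) (f : smor X Y) (g : smor Y Z) :
  is_hypercover cover f -> is_hypercover cover (smor_comp g f) ->
  is_hypercover cover g.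
Proof. exact: main. Qed.
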